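(* Under the interleaved updating scheme with updates $\pi^i_{k,j+1}\in\arg\max_{\hat\pi^i}F_{k,i,j}(\hat\pi^i)$ (maximum assumed attained), the sequence $\{J(\pi_k)\}_{k\ge0}$ converges to some limit $\bar J\in\mathbb R$; the set of limit points of the sequence of joint policies $\{\pi_k\}_{k\ge0}$ is nonempty; and for every subsequence with $\pi_{k_j}\to\bar\pi$ one has $J(\bar\pi)=\bar J$.
   Context: Cooperative Markov game $\langle \mathcal N,\mathcal S,\mathcal A,r,P,d\rangle$ with agents $\mathcal N=[n]=\{1,\dots,n\}$, finite state space $\mathcal S$, finite per-agent action spaces $\mathcal A^i$, joint action space $\mathcal A=\prod_i\mathcal A^i$, joint reward $r:\mathcal S\times\mathcal A\to\mathbb R$ bounded by $|r|\le R_{\max}$, transition kernel $P(\cdot\mid s,a)$, initial distribution $d$, discount $\gamma\in[0,1)$. A policy of agent $i$ is a map $\pi^i(\cdot\mid s)\in\Delta(\mathcal A^i)$ (viewed as a point of the finite-dimensional product of simplices, with the Euclidean topology); a joint policy $\pi=(\pi^i)_i$ acts by $\pi(a\mid s)=\prod_i\pi^i(a^i\mid s)$; write $a=(a^{-i},a^i)$, $\pi^{-i}=(\pi^r)_{r\ne i}$. Return: $J(\pi)=\mathbb E_\pi[\sum_{t\ge0}\gamma^t r(s_t,a_t)]$ with $s_0\sim d$, $a_t\sim\pi(\cdot\mid s_t)$, $s_{t+1}\sim P(\cdot\mid s_t,a_t)$. Value $V_\pi(s)$ and action value $Q_\pi(s,a)$ are the expected discounted returns conditioned on $s_0=s$ (resp.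 $s_0=s,a_0=a$); joint advantage $A_\pi(s,a)=Q_\pi(s,a)-V_\pi(s)$. Single-agent advantage: $Q^i_\pi(s,a^i)=\mathbb E_{a^{-i}\sim\pi^{-i}(\cdot\mid s)}[Q_\pi(s,(a^{-i},a^i))]$, $A^i_\pi(s,a^i)=Q^i_\pi(s,a^i)-V_\pi(s)$. Discounted state visitation: $\rho_\pi(s)=\sum_{t\ge0}\gamma^t\Pr_\pi(s_t=s)$. Interleaved scheme: rounds $k=0,1,2,\dots$; $\pi_k=(\pi^i_k)_i$ is the joint policy at the start of round $k$ ($\pi_0$ arbitrary). Within round $k$ agents are processed in order $i=1,\dots,n$; agent $i$ performs $K_i\ge1$ micro-steps $j=0,\dots,K_i-1$ producing iterates $\pi^i_{k,0}=\pi^i_k,\pi^i_{k,1},\dots,\pi^i_{k,K_i}$, and then $\pi^i_{k+1}:=\pi^i_{k,K_i}$. Complement policy: $\tau^{-i}_k:=(\{\pi^r_{k+1}\}_{r<i},\{\pi^r_k\}_{r>i})$; baseline joint policy $\Pi_{k,i,j}:=(\tau^{-i}_k,\pi^i_{k,j})$. Surrogate: for a policy $\hat\pi^i$ of agent $i$, $L^i_{\Pi_{k,i,j}}(\tau^{-i}_k,\hat\pi^i):=\sum_{s}\rho_{\Pi_{k,i,j}}(s)\sum_{a^i}\hat\pi^i(a^i\mid s)\,A^i_{\Pi_{k,i,j}}(s,a^i)$. Constants: $\varepsilon_{k,i,j}=\max_{s,a}|A_{\Pi_{k,i,j}}(s,a)|$, $C_{k,i,j}=\frac{4\gamma\varepsilon_{k,i,j}}{(1-\gamma)^2}$.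 Max conditional KL: $D^{\max}_{\mathrm{KL}}(\mu,\nu)=\sup_s\mathrm{KL}(\mu(\cdot\mid s)\,\|\,\nu(\cdot\mid s))$. Micro-step objective: $F_{k,i,j}(\hat\pi^i):=L^i_{\Pi_{k,i,j}}(\tau^{-i}_k,\hat\pi^i)-C_{k,i,j}\,D^{\max}_{\mathrm{KL}}(\pi^i_{k,j},\hat\pi^i)$. *)

(* Defs.v *)
From HB Require Import structures.
From mathcomp Require Import all_boot all_order all_algebra.
From mathcomp Require Import all_classical all_reals all_analysis.
Set Implicit Arguments. Unset Strict Implicit. Unset Printing Implicit Defensive.
Import Order.TTheory GRing.Theory Num.Theory.
Import numFieldNormedType.Exports.
Local Open Scope ring_scope.

Section MarkovGame.
Variables (R : realType) (S : finType) (n : nat) (A : 'I_n -> finType).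

Definition pol (i : 'I_n) := S -> A i -> R.
Definition jpol := forall i : 'I_n, pol i.
Definition jact := {dffun forall i : 'I_n, A i}.

Definition is_dist (T : finType) (mu : T -> R) :=
  (forall t, 0 <= mu t) /\ \sum_t mu t = 1.
Definition is_pol i (p : pol i) := forall s, is_dist (p s).
Definition is_jpol (pi : jpol) := forall i, is_pol (pi i).

Definition jprob (pi : jpol) (s : S) (a : jact) : R := \prod_(i < n) pi i s (a i).

Variables (r : S -> jact -> R) (P : S -> jact -> S -> R) (gamma : R).

Definition Ppi (pi : jpol) (s s' : S) : R := \sum_(a : jact) jprob pi s a * P s a s'.
Definition rpi (pi : jpol) (s : S) : R := \sum_(a : jact) jprob pi s a * r s a.

(* law of s_t under pi when s_0 ~ mu *)
Fixpoint sdist (pi : jpol) (mu : S -> R) (t : nat) : S -> R :=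
  match t with
  | 0 => mu
  | t'.+1 => fun s' => \sum_(s : S) sdist pi mu t' s * Ppi pi s s'
  end.

(* E_pi [ sum_t gamma^t r(s_t,a_t) ] with s_0 ~ mu *)
Definition ret (pi : jpol) (mu : S -> R) : R :=
  limn (fun N => \sum_(t < N) gamma ^+ t * \sum_(s : S) sdist pi mu t s * rpi pi s).

Definition dirac (s : S) : S -> R := fun s' => (s' == s)%:R.

Definition Vf (pi : jpol) (s : S) : R := ret pi (dirac s).
(* s_0 = s, a_0 = a, then s_1 ~ P(.|s,a) and pi afterwards *)
Definition Qf (pi : jpol) (s : S) (a : jact) : R := r s a + gamma * ret pi (P s a).
Definition Af (pi : jpol) (s : S) (a : jact) : R := Qf pi s a - Vf pi s.
Definition Jf (d : S -> R) (pi : jpol) : R := ret pi d.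
Definition rho (d : S -> R) (pi : jpol) (s : S) : R :=
  limn (fun N => \sum_(t < N) gamma ^+ t * sdist pi d t s).

Definition Qi (pi : jpol) (i : 'I_n) (s : S) (ai : A i) : R :=
  \sum_(a : jact | a i == ai) (\prod_(l < n | l != i) pi l s (a l)) * Qf pi s a.
Definition Ai (pi : jpol) (i : 'I_n) (s : S) (ai : A i) : R := Qi pi s ai - Vf pi s.

(* surrogate L^i_Pi(tau^{-i}, hat) ; tau^{-i} is the non-i part of Pi *)
Definition Lsur (d : S -> R) (Pi : jpol) (i : 'I_n) (hat : pol i) : R :=
  \sum_(s : S) rho d Pi s * \sum_(ai : A i) hat s ai * Ai Pi s ai.

Definition epsA (pi : jpol) : R :=
  \big[Num.max/0]_(s : S) \big[Num.max/0]_(a : jact) `|Af pi s a|.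
Definition Cpen (pi : jpol) : R := 4 * gamma * epsA pi / (1 - gamma) ^+ 2.

End MarkovGame.

(* KL divergence, with 0 log 0 = 0 and KL = +oo if mu is not << nu *)
Definition KL (R : realType) (T : finType) (mu nu : T -> R) : \bar R :=
  if [exists t, (0 < mu t) && (nu t == 0)] then +oo%E
  else (\sum_(t | 0 < mu t) mu t * ln (mu t / nu t))%:E.

Definition DmaxKL (R : realType) (S : finType) (T : finType) (p q : S -> T -> R) : \bar R :=
  \big[maxe/-oo%E]_(s : S) KL (p s) (q s).

(* micro-step objective F_{k,i,j}(hat) with baseline Pi = Pi_{k,i,j}, cur = pi^i_{k,j} *)
Definition Fobj (R : realType) (S : finType) (n : nat) (A : 'I_n -> finType)
  (r : S -> jact A -> R) (P : S -> jact A -> S -> R) (gamma : R) (d : S -> R)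
  (Pi : jpol R S A) (i : 'I_n) (cur hat : pol R S A i) : \bar R :=
  ((Lsur r P gamma d Pi hat)%:E - (Cpen r P gamma Pi)%:E * DmaxKL cur hat)%E.

Definition baseline (R : realType) (S : finType) (n : nat) (A : 'I_n -> finType)
  (pk pk1 : jpol R S A) (i : 'I_n) (cur : jpol R S A) : jpol R S A :=
  fun l => if (l < i)%N then pk1 l else if (i < l)%N then pk l else cur l.

(* Main.v *)
Require Import Defs.
From HB Require Import structures.
From mathcomp Require Import all_boot all_order all_algebra.
From mathcomp Require Import all_classical all_reals all_analysis.
From mathcomp Require Import ring lra.
Import Order.TTheory GRing.Theory Num.Theory.
Import numFieldNormedType.Exports.
Local Open Scope classical_set_scope.
Local Open Scope ring_scope.

Lemma sum_prod_dffun (R : comNzRingType) (I : finType) (T_ : I -> finType) (f : forall i, T_ i -> R) :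
  \sum_(a : {dffun forall i, T_ i}) \prod_i f i (a i) = \prod_i \sum_(x : T_ i) f i x.
Proof.
rewrite (reindex (@dffun_of_fprod I T_)); last exact/onW_bij/dffun_of_fprod_bij.
transitivity (\sum_(t : fprod T_) \prod_(i in I) [ffun x => f i x] (t i)).
  by apply: eq_bigr => t _; apply: eq_bigr => i _; rewrite !ffunE.
rewrite (big_fprod).
rewrite -[LHS]/(\sum_(g in family (tagged_with T_)) \prod_i untag 0 [ffun x => f i x] (g i)).
have := @bigA_distr_big_dep _ _ _ _ _ I _ (fun i => tagged_with T_ i) (fun i j => untag 0 [ffun x => f i x] j).
move=> H; rewrite -H; apply: eq_bigr => i _.
transitivity (\sum_(x : T_ i) [ffun x => f i x] x); last by apply: eq_bigr=> x _; rewrite ffunE.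
rewrite (big_tag (fun i => (fun_of_fin [ffun x => f i x])) i).
by apply: eq_bigl.
Qed.

Section RealLemmas.
Variable R : realType.

Lemma cvg_sumr (I : Type) (r : seq I) (Pr : pred I) (f : I -> nat -> R) (l : I -> R) :
  (forall i, f i @ \oo --> l i) ->
  (fun N => \sum_(i <- r | Pr i) f i N) @ \oo --> \sum_(i <- r | Pr i) l i.
Proof.
move=> hf; elim: r => [|i r IH].
  rewrite big_nil; under eq_cvg do rewrite big_nil; exact: cvg_cst.
rewrite big_cons; under eq_cvg do rewrite big_cons.
case: ifPn => // _; exact: cvgD.
Qed.

Lemma cvg_prodr (I : Type) (r : seq I) (Pr : pred I) (f : I -> nat -> R) (l : I -> R) :
  (forall i, f i @ \oo --> l i) ->
  (fun N => \prod_(i <- r | Pr i) f i N) @ \oo --> \prod_(i <- r | Pr i) l i.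
Proof.
move=> hf; elim: r => [|i r IH].
  rewrite big_nil; under eq_cvg do rewrite big_nil; exact: cvg_cst.
rewrite big_cons; under eq_cvg do rewrite big_cons.
case: ifPn => // _; exact: cvgM.
Qed.

Lemma lim_le_bound (u : nat -> R) (l B : R) :
  u @ \oo --> l -> (forall N, u N <= B) -> l <= B.
Proof.
move=> ul hB; rewrite -(cvg_lim _ ul) //; apply: limr_le; first by apply/cvg_ex; exists l.
by near=> N; apply: hB.
Unshelve. all: by end_near. Qed.

Lemma lim_ge_bound (u : nat -> R) (l B : R) :
  u @ \oo --> l -> (forall N, B <= u N) -> B <= l.
Proof.
move=> ul hB; rewrite -(cvg_lim _ ul) //; apply: limr_ge; first by apply/cvg_ex; exists l.
by near=> N; apply: hB.
Unshelve. all: by end_near. Qed.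

Lemma lim_abs_bound (u : nat -> R) (l B : R) :
  u @ \oo --> l -> (forall N, `|u N| <= B) -> `|l| <= B.
Proof.
move=> ul hB; apply: (@lim_le_bound (fun N => `|u N|)) => //; exact: cvg_norm.
Qed.

Variable gamma : R.
Hypotheses (hg0 : 0 <= gamma) (hg1 : gamma < 1).

Lemma geom_sum_le N : \sum_(t < N) gamma ^+ t <= (1 - gamma)^-1.
Proof.
have h1 : 0 < 1 - gamma by rewrite subr_gt0.
rewrite -[X in _ <= X]div1r ler_pdivlMr // mulr_suml.
have -> : \sum_(t < N) gamma ^+ t * (1 - gamma) = 1 - gamma ^+ N.
  elim: N => [|N IH]; first by rewrite big_ord0 expr0 subrr.
  rewrite big_ord_recr /= IH exprS; ring.
by rewrite lerBlDr lerDl exprn_ge0.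
Qed.

Lemma tgeom_sum_le N : \sum_(t < N) t%:R * gamma ^+ t <= gamma / (1 - gamma) ^+ 2.
Proof.
have h1 : 0 < 1 - gamma by rewrite subr_gt0.
rewrite ler_pdivlMr ?exprn_gt0 // mulr_suml.
have -> : \sum_(t < N) t%:R * gamma ^+ t * (1 - gamma) ^+ 2 =
    gamma - gamma ^+ N * (N%:R - (N%:R - 1) * gamma).
  elim: N => [|N IH]; first by rewrite big_ord0 expr0 mul1r; ring.
  rewrite big_ord_recr /= IH [gamma ^+ N.+1]exprS -natr1; ring.
rewrite lerBlDr lerDl mulr_ge0 ?exprn_ge0 //.
have hN : 0 <= (N%:R : R) by [].
have -> : (N%:R - (N%:R - 1) * gamma) = N%:R * (1 - gamma) + gamma by ring.
by rewrite addr_ge0 // mulr_ge0 // ltW.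
Qed.

Lemma series_cvg (u : nat -> R) (c : R) :
  (forall t, `|u t| <= c * gamma ^+ t) -> cvgn (fun N => \sum_(t < N) u t).
Proof.
move=> hu.
have -> : (fun N => \sum_(t < N) u t) = series u.
  by apply/funext => N; rewrite /series /= big_mkord.
apply: normed_cvg; apply: nondecreasing_is_cvgn.
  apply/nondecreasing_seqP => N; rewrite /= seriesSr lerDl; exact: normr_ge0.
exists (c * (1 - gamma)^-1) => _ [N _ <-]; rewrite /= seriesEord /=.
apply: (@le_trans _ _ (\sum_(k < N) c * gamma ^+ k)); first by apply: ler_sum => t _; exact: hu.
rewrite -mulr_sumr; apply: ler_wpM2l; last exact: geom_sum_le.
have := hu 0%N; rewrite expr0 mulr1; apply: le_trans; exact: normr_ge0.
Qed.


Lemma le_bigmax0 (T : finType) (F : T -> R) x : F x <= \big[Num.max/0]_(y : T) F y.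
Proof.
have : x \in index_enum T by rewrite mem_index_enum.
elim: (index_enum T) => // y l IH; rewrite in_cons big_cons => /orP [/eqP <- | /IH h].
  by rewrite le_max lexx.
by rewrite le_max h orbT.
Qed.

Lemma bigmax0_attained_seq (T : eqType) (F : T -> R) (l : seq T) :
  \big[Num.max/0]_(y <- l) F y = 0 \/ exists y, \big[Num.max/0]_(y <- l) F y = F y.
Proof.
elim: l => [|y l IH]; first by rewrite big_nil; left.
rewrite big_cons; have [h|h] := leP (F y) (\big[Num.max/0]_(j <- l) F j).
  exact: IH.
by right; exists y.
Qed.

Lemma bigmax0_attained (T : finType) (F : T -> R) :
  \big[Num.max/0]_(y : T) F y = 0 \/ exists y, \big[Num.max/0]_(y : T) F y = F y.
Proof. exact: bigmax0_attained_seq. Qed.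

Lemma le_bigmaxe (T : finType) (F : T -> \bar R) x : (F x <= \big[maxe/-oo%E]_(y : T) F y)%E.
Proof.
have : x \in index_enum T by rewrite mem_index_enum.
elim: (index_enum T) => // y l IH; rewrite in_cons big_cons => /orP [/eqP <- | /IH h].
  by rewrite le_max lexx.
by rewrite le_max h orbT.
Qed.

Lemma cauchy_schwarz (I : finType) (u v : I -> R) :
  (\sum_i u i * v i) ^+ 2 <= (\sum_i u i ^+ 2) * (\sum_i v i ^+ 2).
Proof.
set A := \sum_i u i ^+ 2; set B := \sum_i u i * v i; set C := \sum_i v i ^+ 2.
have key t : 0 <= t ^+ 2 * A - 2 * t * B + C.
  have -> : t ^+ 2 * A - 2 * t * B + C = \sum_i (u i * t - v i) ^+ 2.
    rewrite /A /B /C mulr_sumr mulr_sumr -sumrB -big_split /=.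
    by apply: eq_bigr => i _; ring.
  by apply: sumr_ge0 => i _; exact: sqr_ge0.
have A0 : 0 <= A by apply: sumr_ge0 => i _; exact: sqr_ge0.
have [Az|Apos] := eqVneq A 0.
  have u0 : forall i, u i = 0.
    move=> i; apply/eqP; rewrite -sqrf_eq0; apply/eqP.
    by move/eqP: Az; rewrite psumr_eq0 => [/allP /(_ i) /=|j _]; [rewrite mem_index_enum => /(_ isT) /eqP|exact: sqr_ge0].
  have -> : B = 0 by rewrite /B big1 // => i _; rewrite u0 mul0r.
  by rewrite Az expr0n /= mul0r.
have Ap : 0 < A by rewrite lt_neqAle eq_sym Apos A0.
have := key (B / A); set t := B / A => h.
have tA : t * A = B by rewrite /t divfK.
nra.
Qed.

Lemma subr_ge0_of (x y : R) : x <= y -> 0 <= y - x.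
Proof. by rewrite subr_ge0. Qed.

Lemma ln_bound_term (a b : R) : 0 < a -> 0 < b ->
  2 * (a ^+ 2 - a * b) <= a ^+ 2 * ln (a ^+ 2 / b ^+ 2).
Proof.
move=> ha hb.
have hy : 0 < b / a by rewrite divr_gt0.
have hL : ln (b / a) <= b / a - 1.
  have := @le_ln1Dx R (b / a - 1); rewrite [1 + _]addrC subrK; apply.
  lra.
have -> : a ^+ 2 / b ^+ 2 = ((b / a) ^-1) ^+ 2 by rewrite invf_div expr_div_n.
rewrite lnXn ?invr_gt0 // lnV ?posrE //.
have hab : a * (b / a) = b by rewrite mulrC divfK // gt_eqF.
set y := b / a in hy hL hab *; set L := ln y in hL *.
rewrite mulr2n -hab.
have := mulr_ge0 (ltW (exprn_gt0 2 ha)) (subr_ge0_of _ _ hL).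
lra.
Qed.

Lemma pinsker4 (T : finType) (p q : T -> R) :
  (forall t, 0 <= p t) -> \sum_t p t = 1 -> (forall t, 0 <= q t) -> \sum_t q t = 1 ->
  (((\sum_t `|p t - q t|) ^+ 2 / 4)%:E <= KL p q)%E.
Proof.
move=> p0 p1 q0 q1; rewrite /KL; case: ifPn => [_|hex]; first exact: leey.
rewrite lee_fin.
have qpos : forall t, 0 < p t -> 0 < q t.
  move=> t pt; move/existsPn: hex => /(_ t); rewrite pt /= => hq.
  by rewrite lt_neqAle eq_sym hq q0.
pose a t := Num.sqrt (p t); pose b t := Num.sqrt (q t).
have pa t : p t = a t ^+ 2 by rewrite sqr_sqrtr.
have qb t : q t = b t ^+ 2 by rewrite sqr_sqrtr.
have a0 t : 0 <= a t by exact: sqrtr_ge0.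
have b0 t : 0 <= b t by exact: sqrtr_ge0.
set X := \sum_t a t * b t.
have X0 : 0 <= X by apply: sumr_ge0 => t _; rewrite mulr_ge0.
have KLge : 2 * (1 - X) <= \sum_(t | 0 < p t) p t * ln (p t / q t).
  have -> : 2 * (1 - X) = \sum_(t | 0 < p t) 2 * (p t - a t * b t).
    rewrite -p1 /X -sumrB mulr_sumr [RHS]big_mkcond /=; apply: eq_bigr => t _.
    case: ifPn => // hp.
    have hp0 : p t = 0 by apply/eqP; rewrite eq_le p0 andbT leNgt.
    by rewrite /a hp0 sqrtr0 mul0r subrr mulr0.
  apply: ler_sum => t hp.
  have hq := qpos t hp.
  have ha : 0 < a t by rewrite /a sqrtr_gt0.
  have hb : 0 < b t by rewrite /b sqrtr_gt0.
  by have := ln_bound_term _ _ ha hb; rewrite -pa -qb.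
have H1 : \sum_t (a t - b t) ^+ 2 = 2 * (1 - X).
  have -> : \sum_t (a t - b t) ^+ 2 = \sum_t p t + \sum_t q t - 2 * X.
    rewrite /X mulr_sumr -big_split -sumrB /=; apply: eq_bigr => t _; rewrite pa qb; ring.
  by rewrite p1 q1; ring.
have H2 : \sum_t (a t + b t) ^+ 2 = 2 * (1 + X).
  have -> : \sum_t (a t + b t) ^+ 2 = \sum_t p t + \sum_t q t + 2 * X.
    rewrite /X mulr_sumr -!big_split /=; apply: eq_bigr => t _; rewrite pa qb; ring.
  by rewrite p1 q1; ring.
have HD : \sum_t `|p t - q t| = \sum_t `|a t - b t| * (a t + b t).
  apply: eq_bigr => t _; rewrite pa qb -[a t + b t]ger0_norm ?addr_ge0 // -normrM; congr `|_|; ring.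
have CS := cauchy_schwarz _ (fun t => `|a t - b t|) (fun t => a t + b t).
rewrite -HD /= in CS.
have H1' : \sum_t `|a t - b t| ^+ 2 = 2 * (1 - X) by rewrite -H1; apply: eq_bigr => t _; rewrite real_normK // num_real.
rewrite H1' H2 in CS.
have X1 : X <= 1.
  have : 0 <= \sum_t (a t - b t) ^+ 2 by apply: sumr_ge0 => t _; exact: sqr_ge0.
  rewrite H1; lra.
apply: le_trans KLge.
set D := \sum_t `|p t - q t| in CS *.
have : 2 * (1 - X) * (2 * (1 + X)) <= 2 * (1 - X) * 4.
  by apply: ler_wpM2l; lra.
rewrite ler_pdivrMr //; lra.
Qed.

End RealLemmas.

Lemma incr_ge (phi : nat -> nat) : (forall m, (phi m < phi m.+1)%N) -> forall m, (m <= phi m)%N.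
Proof. move=> h; elim=> [//|m IH]; exact: leq_ltn_trans IH (h m). Qed.

Lemma incr_mono (phi : nat -> nat) : (forall m, (phi m < phi m.+1)%N) ->
  forall a b, (a <= b)%N -> (phi a <= phi b)%N.
Proof.
move=> h a b /subnKC <-; elim: (b - a)%N => [|k IH]; first by rewrite addn0.
by rewrite addnS; exact: leq_trans IH (ltnW (h _)).
Qed.

Lemma subseq_cvg (R : realType) (phi : nat -> nat) (u : nat -> R) (l : R) :
  (forall m, (phi m < phi m.+1)%N) -> u @ \oo --> l -> (fun m => u (phi m)) @ \oo --> l.
Proof.
move=> hphi hu.
have hoo : phi @ \oo --> \oo.
  move=> A [N _ hA]; exists N => // m /= hm; apply: hA; rewrite /=.
  exact: leq_trans hm (incr_ge phi hphi m).
exact: (cvg_comp _ _ hoo hu).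
Qed.

Lemma bw_seq (R : realType) (I : eqType) (x : nat -> I -> R) (l : seq I) :
  (forall k i, `|x k i| <= 1) ->
  exists phi : nat -> nat, (forall m, (phi m < phi m.+1)%N) /\
    exists L : I -> R, forall i, i \in l -> (fun m => x (phi m) i) @ \oo --> L i.
Proof.
move=> hx; elim: l => [|i0 l [phi [hphi [L hL]]]].
  by exists id; split => // ; exists (fun _ => 0).
have bnd : bounded_fun (fun m => x (phi m) i0).
  rewrite /= /bounded_near; near=> M => m _ /=.
  apply: le_trans (hx _ _) _; near: M; exact: nbhs_pinfty_ge.
have [psi hpsi /cvg_ex [li hli]] := bolzano_weierstrass bnd.
have hpsi' : forall m, (psi m < psi m.+1)%N by move=> m; exact: (proj2 (@increasing_seqP _ _ psi) hpsi m).
exists (fun m => phi (psi m)); split.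
  move=> m; apply: (@leq_trans (phi (psi m).+1)); first exact: hphi.
  exact: (incr_mono phi hphi _ _ (hpsi' m)).
exists (fun j => if j == i0 then li else L j) => j; rewrite in_cons.
case: eqP => [->|_] /= hj; first exact: hli.
exact: (subseq_cvg _ _ (fun m => x (phi m) j) _ hpsi' (hL j hj)).
Unshelve. all: by end_near. Qed.

Lemma lim_uniq (R : realType) (u : nat -> R) (l1 l2 : R) :
  u @ \oo --> l1 -> u @ \oo --> l2 -> l1 = l2.
Proof. move=> h1 h2; rewrite -(cvg_lim _ h1) // -(cvg_lim _ h2) //. Qed.

Section MDP.
Variables (R : realType) (S : finType) (n : nat) (A : 'I_n -> finType)
  (r : S -> jact A -> R) (Rmax : R) (P : S -> jact A -> S -> R) (gamma : R).
Hypotheses (hr : forall s a, `|r s a| <= Rmax) (hP : forall s a, is_dist (P s a))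
  (hg0 : 0 <= gamma) (hg1 : gamma < 1).

Local Notation jpol := (jpol R S A).
Implicit Types (pi : jpol) (s : S) (a : jact A) (mu f : S -> R).

Definition dot (x f : S -> R) := \sum_s x s * f s.
Definition l1 (x : S -> R) := \sum_s `|x s|.
Definition partial (pi : jpol) (mu f : S -> R) (N : nat) :=
  \sum_(t < N) gamma ^+ t * dot (sdist P pi mu t) f.
Definition vval (pi : jpol) (mu f : S -> R) := limn (partial pi mu f).

Lemma retE pi mu : ret r P gamma pi mu = vval pi mu (rpi r pi).
Proof. by []. Qed.

Lemma jprob_ge0 pi s a : is_jpol pi -> 0 <= jprob pi s a.
Proof. by move=> hpi; apply: prodr_ge0 => i _; exact: (hpi i s).1. Qed.

Lemma jprob_sum1 pi s : is_jpol pi -> \sum_a jprob pi s a = 1.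
Proof.
move=> hpi; rewrite /jprob (@sum_prod_dffun R 'I_n A (fun i x => pi i s x)).
by apply: big1 => i _; exact: (hpi i s).2.
Qed.

Lemma Ppi_ge0 pi s s' : is_jpol pi -> 0 <= Ppi P pi s s'.
Proof.
move=> hpi; apply: sumr_ge0 => a _; apply: mulr_ge0; first exact: jprob_ge0.
exact: (hP s a).1.
Qed.

Lemma Ppi_sum1 pi s : is_jpol pi -> \sum_s' Ppi P pi s s' = 1.
Proof.
move=> hpi; rewrite /Ppi exchange_big /= -(jprob_sum1 pi s hpi).
by apply: eq_bigr => a _; rewrite -mulr_sumr (hP s a).2 mulr1.
Qed.

Lemma rpi_bound pi s : is_jpol pi -> `|rpi r pi s| <= `|Rmax|.
Proof.
move=> hpi; rewrite /rpi; apply: (le_trans (ler_norm_sum _ _ _)).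
apply: (@le_trans _ _ (\sum_a jprob pi s a * `|Rmax|)).
  apply: ler_sum => a _; rewrite normrM ger0_norm ?jprob_ge0 //.
  apply: ler_wpM2l; first exact: jprob_ge0.
  exact: le_trans (hr s a) (ler_norm _).
by rewrite -mulr_suml jprob_sum1 // mul1r.
Qed.

Lemma sdist_shift pi mu t :
  sdist P pi mu t.+1 = sdist P pi (fun s' => \sum_s mu s * Ppi P pi s s') t.
Proof.
elim: t => [//|t IH]; apply/funext => s' /=.
by apply: eq_bigr => s _; rewrite -IH.
Qed.

Lemma sdist_lin pi mu t s :
  sdist P pi mu t s = \sum_u mu u * sdist P pi (@Defs.dirac R S u) t s.
Proof.
elim: t s => [|t IH] s /=.
  rewrite (bigD1 s) //= /Defs.dirac eqxx mulr1 big1 ?addr0 // => u hu.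
  by rewrite eq_sym (negbTE hu) mulr0.
under eq_bigr do rewrite IH mulr_suml.
rewrite exchange_big /=; apply: eq_bigr => u _; rewrite mulr_sumr.
by apply: eq_bigr => s0 _; rewrite mulrA.
Qed.

Lemma sdist_l1 pi mu t : is_jpol pi -> l1 (sdist P pi mu t) <= l1 mu.
Proof.
move=> hpi; elim: t => [//|t IH]; apply: le_trans IH.
rewrite /l1 /=.
apply: (@le_trans _ _ (\sum_s' \sum_s `|sdist P pi mu t s| * Ppi P pi s s')).
  apply: ler_sum => s' _; apply: (le_trans (ler_norm_sum _ _ _)).
  by apply: ler_sum => s _; rewrite normrM (ger0_norm (Ppi_ge0 _ _ _ hpi)).
rewrite exchange_big /=; apply: ler_sum => s _.
by rewrite -mulr_sumr Ppi_sum1 // mulr1.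
Qed.

Lemma sdist_ge0 pi mu t s : is_jpol pi -> (forall s, 0 <= mu s) -> 0 <= sdist P pi mu t s.
Proof.
move=> hpi hmu; elim: t s => [//|t IH] s /=.
by apply: sumr_ge0 => u _; apply: mulr_ge0 => //; exact: Ppi_ge0.
Qed.

Lemma sdist_sum pi mu t : is_jpol pi -> \sum_s sdist P pi mu t s = \sum_s mu s.
Proof.
move=> hpi; elim: t => [//|t IH] /=; rewrite exchange_big /= -IH.
by apply: eq_bigr => s _; rewrite -mulr_sumr Ppi_sum1 // mulr1.
Qed.

Lemma dot_bound x f : `|dot x f| <= l1 x * l1 f.
Proof.
rewrite /dot; apply: (le_trans (ler_norm_sum _ _ _)); rewrite /l1 mulr_suml.
apply: ler_sum => s _; rewrite normrM; apply: ler_wpM2l => //.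
by rewrite (bigD1 s) //= lerDl sumr_ge0.
Qed.

Lemma partial_cvg pi mu f : is_jpol pi -> partial pi mu f @ \oo --> vval pi mu f.
Proof.
move=> hpi; apply: (@series_cvg R gamma hg0 hg1 (fun t => gamma ^+ t * dot (sdist P pi mu t) f) (l1 mu * l1 f)) => t.
rewrite normrM ger0_norm ?exprn_ge0 // [X in _ <= X]mulrC; apply: ler_wpM2l; first exact: exprn_ge0.
apply: (le_trans (dot_bound _ _)); apply: ler_wpM2r; first exact: sumr_ge0.
exact: sdist_l1.
Qed.

Lemma val_lin pi mu f : is_jpol pi -> vval pi mu f = \sum_u mu u * vval pi (@Defs.dirac R S u) f.
Proof.
move=> hpi; apply: (cvg_lim _ _) => //.
have -> : partial pi mu f = fun N => \sum_u mu u * partial pi (@Defs.dirac R S u) f N.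
  apply/funext => N; rewrite /partial.
  under eq_bigr do rewrite /dot; under [in RHS]eq_bigr do rewrite /dot mulr_sumr.
  rewrite exchange_big /=; apply: eq_bigr => t _; rewrite mulr_sumr.
  transitivity (\sum_i \sum_u mu u * (gamma ^+ t * (sdist P pi (@Defs.dirac R S u) t i * f i))).
    apply: eq_bigr => i _; rewrite (sdist_lin pi mu t i) mulr_suml mulr_sumr.
    by apply: eq_bigr => u _; ring.
  rewrite exchange_big /=; apply: eq_bigr => u _; rewrite !mulr_sumr.
  by apply: eq_bigr => s _; ring.
apply: cvg_sumr => u; apply: cvgM; first exact: cvg_cst.
exact: partial_cvg.
Qed.

Lemma dirac_sum u (g : S -> R) : \sum_s @Defs.dirac R S u s * g s = g u.
Proof.
rewrite (bigD1 u) //= /Defs.dirac eqxx mul1r big1 ?addr0 // => s hs.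
by rewrite (negbTE hs) mul0r.
Qed.

Lemma partial_S pi u f N :
  partial pi (@Defs.dirac R S u) f N.+1 = f u + gamma * partial pi (fun s' => Ppi P pi u s') f N.
Proof.
rewrite /partial big_ord_recl expr0 mul1r; congr (_ + _); first by rewrite /dot dirac_sum.
rewrite mulr_sumr; apply: eq_bigr => t _.
rewrite lift0 sdist_shift.
have -> : (fun s' => \sum_s @Defs.dirac R S u s * Ppi P pi s s') = (fun s' => Ppi P pi u s').
  by apply/funext => s'; rewrite dirac_sum.
by rewrite exprS mulrA.
Qed.

Lemma bellman pi u : is_jpol pi ->
  Vf r P gamma pi u = rpi r pi u + gamma * \sum_s' Ppi P pi u s' * Vf r P gamma pi s'.
Proof.
move=> hpi.
have h1 : (fun N => partial pi (@Defs.dirac R S u) (rpi r pi) N.+1) @ \oo --> Vf r P gamma pi u.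
  rewrite (cvg_shiftS (fun N => partial pi (@Defs.dirac R S u) (rpi r pi) N)).
  exact: partial_cvg.
have h2 : (fun N => partial pi (@Defs.dirac R S u) (rpi r pi) N.+1) @ \oo -->
    rpi r pi u + gamma * vval pi (fun s' => Ppi P pi u s') (rpi r pi).
  under eq_cvg do rewrite partial_S.
  apply: cvgD; first exact: cvg_cst.
  apply: cvgM; first exact: cvg_cst.
  exact: partial_cvg.
rewrite (cvg_unique _ h1 h2) // val_lin //.
Qed.

Lemma ret_lin pi mu : is_jpol pi ->
  ret r P gamma pi mu = \sum_u mu u * Vf r P gamma pi u.
Proof. by move=> hpi; rewrite retE val_lin. Qed.

Lemma QfE pi s a : is_jpol pi ->
  Qf r P gamma pi s a = r s a + gamma * \sum_s' P s a s' * Vf r P gamma pi s'.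
Proof. by move=> hpi; rewrite /Qf ret_lin. Qed.

Lemma sumQ pi pi' s : is_jpol pi ->
  \sum_a jprob pi' s a * Qf r P gamma pi s a =
  rpi r pi' s + gamma * \sum_u Ppi P pi' s u * Vf r P gamma pi u.
Proof.
move=> hpi.
under eq_bigr do rewrite QfE // mulrDr.
rewrite big_split /=; congr (_ + _).
rewrite /Ppi mulr_sumr.
under [RHS]eq_bigr do rewrite mulr_suml mulr_sumr.
rewrite [RHS]exchange_big /=; apply: eq_bigr => a _.
rewrite mulr_sumr mulr_sumr; apply: eq_bigr => u _; ring.
Qed.

Lemma bellmanQ pi s : is_jpol pi ->
  \sum_a jprob pi s a * Qf r P gamma pi s a = Vf r P gamma pi s.
Proof. by move=> hpi; rewrite sumQ // -bellman. Qed.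

Lemma Af_zero pi s : is_jpol pi -> \sum_a jprob pi s a * Af r P gamma pi s a = 0.
Proof.
move=> hpi; rewrite /Af; under eq_bigr do rewrite mulrBr.
by rewrite sumrB bellmanQ // -mulr_suml jprob_sum1 // mul1r subrr.
Qed.

Definition Gf pi pi' s :=
  rpi r pi' s + gamma * \sum_u Ppi P pi' s u * Vf r P gamma pi u - Vf r P gamma pi s.

Lemma partial_G pi pi' mu N :
  partial pi' mu (Gf pi pi') N =
  partial pi' mu (rpi r pi') N + gamma ^+ N * dot (sdist P pi' mu N) (Vf r P gamma pi)
  - dot mu (Vf r P gamma pi).
Proof.
elim: N => [|N IH].
  by rewrite /partial !big_ord0 expr0 mul1r /=; ring.
rewrite /partial !big_ord_recr /= -!/(partial _ _ _ _) IH.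
have -> : dot (sdist P pi' mu N) (Gf pi pi') =
    dot (sdist P pi' mu N) (rpi r pi') + gamma * dot (sdist P pi' mu N.+1) (Vf r P gamma pi)
    - dot (sdist P pi' mu N) (Vf r P gamma pi).
  rewrite /dot /Gf /=.
  under eq_bigr do rewrite mulrBr mulrDr.
  rewrite sumrB big_split /=; congr (_ + _ - _).
  rewrite mulr_sumr; under [RHS]eq_bigr do rewrite mulr_suml mulr_sumr.
  rewrite [RHS]exchange_big /=; apply: eq_bigr => s _.
  rewrite mulr_sumr mulr_sumr; apply: eq_bigr => u _; ring.
rewrite exprS; ring.
Qed.

Lemma geom_cvg0 (c : R) : (fun N => gamma ^+ N * c) @ \oo --> 0.
Proof.
rewrite -(mul0r c); apply: cvgM; last exact: cvg_cst.
apply: cvg_expr; rewrite ger0_norm //.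
Qed.

Lemma PDL pi pi' mu : is_jpol pi -> is_jpol pi' ->
  partial pi' mu (Gf pi pi') @ \oo --> ret r P gamma pi' mu - ret r P gamma pi mu.
Proof.
move=> hpi hpi'.
under eq_cvg do rewrite partial_G.
rewrite (ret_lin pi mu hpi) -/(dot mu (Vf r P gamma pi)) -[ret r P gamma pi' mu]addr0.
apply: cvgB; last exact: cvg_cst.
apply: cvgD; first exact: partial_cvg.
set c := l1 mu * l1 (Vf r P gamma pi).
apply: (@squeeze_cvgr _ _ _ _ (fun N => - (gamma ^+ N * c)) (fun N => gamma ^+ N * c)).
- near=> N; rewrite -ler_norml normrM ger0_norm ?exprn_ge0 //.
  apply: ler_wpM2l; first exact: exprn_ge0.
  apply: (le_trans (dot_bound _ _)); apply: ler_wpM2r; first exact: sumr_ge0.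
  exact: sdist_l1.
- rewrite -oppr0; apply: cvgN; exact: geom_cvg0.
- exact: geom_cvg0.
Unshelve. all: by end_near. Qed.

Lemma abs_le_l1 x s : `|x s| <= l1 x.
Proof. by rewrite /l1 (bigD1 s) //= lerDl sumr_ge0. Qed.

Lemma dot_bound_c x f c : (forall s, `|f s| <= c) -> `|dot x f| <= l1 x * c.
Proof.
move=> hf; rewrite /dot; apply: (le_trans (ler_norm_sum _ _ _)); rewrite /l1 mulr_suml.
apply: ler_sum => s _; rewrite normrM; apply: ler_wpM2l => //; exact: hf.
Qed.

Lemma l1_dist x : (forall s, 0 <= x s) -> \sum_s x s = 1 -> l1 x = 1.
Proof. by move=> h0 h1; rewrite /l1 -h1; apply: eq_bigr => s _; rewrite ger0_norm. Qed.

Lemma S_inhabited (mu : S -> R) : \sum_s mu s = 1 -> exists s0 : S, True.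
Proof.
case: (pickP (@predT S)) => [s0 _|h] hmu; first by exists s0.
by move: hmu; rewrite big_pred0 // => /esym/eqP; rewrite oner_eq0.
Qed.

Lemma PDL_bound pi pi' mu g : is_jpol pi -> is_jpol pi' ->
  (forall s, 0 <= mu s) -> \sum_s mu s = 1 ->
  (forall s, `|Gf pi pi' s| <= g) ->
  `|ret r P gamma pi' mu - ret r P gamma pi mu| <= g / (1 - gamma).
Proof.
move=> hpi hpi' mu0 mu1 hg.
have [s0 _] := S_inhabited _ mu1.
have g0 : 0 <= g by apply: le_trans (hg s0).
apply: (lim_abs_bound _ _ _ _ (PDL pi pi' mu hpi hpi')) => N.
rewrite /partial; apply: (le_trans (ler_norm_sum _ _ _)).
apply: (@le_trans _ _ (\sum_(t < N) gamma ^+ t * g)).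
  apply: ler_sum => t _; rewrite normrM ger0_norm ?exprn_ge0 //.
  apply: ler_wpM2l; first exact: exprn_ge0.
  apply: (le_trans (dot_bound_c _ _ _ hg)).
  by rewrite l1_dist ?mul1r //; [move=> s; exact: sdist_ge0|rewrite sdist_sum].
by rewrite -mulr_suml mulrC; apply: ler_wpM2l => //; exact: geom_sum_le.
Qed.

Lemma J_cont (pis : nat -> jpol) (pibar : jpol) (d : S -> R) :
  is_jpol pibar -> (forall m, is_jpol (pis m)) ->
  (forall i s (x : A i), (fun m => pis m i s x) @ \oo --> pibar i s x) ->
  (forall s, 0 <= d s) -> \sum_s d s = 1 ->
  (fun m => Jf r P gamma d (pis m)) @ \oo --> Jf r P gamma d pibar.
Proof.
move=> hbar hpis hcv d0 d1.
have jcv s a : (fun m => jprob (pis m) s a) @ \oo --> jprob pibar s a.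
  rewrite /jprob; apply: (cvg_prodr R _ _ _ (fun i m => pis m i s (a i))) => i.
  exact: hcv.
have rcv s : (fun m => rpi r (pis m) s) @ \oo --> rpi r pibar s.
  rewrite /rpi; apply: (cvg_sumr R _ _ _ (fun a m => jprob (pis m) s a * r s a)) => a.
  apply: cvgM; [exact: jcv|exact: cvg_cst].
have Pcv s u : (fun m => Ppi P (pis m) s u) @ \oo --> Ppi P pibar s u.
  rewrite /Ppi; apply: (cvg_sumr R _ _ _ (fun a m => jprob (pis m) s a * P s a u)) => a.
  apply: cvgM; [exact: jcv|exact: cvg_cst].
have Gcv s : (fun m => Gf pibar (pis m) s) @ \oo --> 0.
  rewrite -(subrr (Vf r P gamma pibar s)) {1}(bellman pibar s hbar).
  apply: cvgB; last exact: cvg_cst.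
  apply: cvgD; first exact: rcv.
  apply: cvgM; first exact: cvg_cst.
  apply: (cvg_sumr R _ _ _ (fun u m => Ppi P (pis m) s u * Vf r P gamma pibar u)) => u.
  apply: cvgM; [exact: Pcv|exact: cvg_cst].
pose g m := \sum_s `|Gf pibar (pis m) s|.
have gcv : g @ \oo --> 0.
  have H : g @ \oo --> \sum_(s : S) `|0 : R|.
    apply: (cvg_sumr R _ _ _ (fun s m => `|Gf pibar (pis m) s|)) => s.
    apply: cvg_norm; exact: Gcv.
  by move: H; rewrite big1 // => s _; rewrite normr0.
apply/subr_cvg0.
apply: (@squeeze_cvgr _ _ _ _ (fun m => - (g m / (1 - gamma))) (fun m => g m / (1 - gamma))).
- near=> m; rewrite -ler_norml; apply: PDL_bound => //.
  by move=> s; rewrite /g (bigD1 s) //= lerDl sumr_ge0.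
- rewrite -oppr0; apply: cvgN; rewrite -(mul0r ((1 - gamma)^-1)); apply: cvgM => //; exact: cvg_cst.
- rewrite -(mul0r ((1 - gamma)^-1)); apply: cvgM => //; exact: cvg_cst.
Unshelve. all: by end_near. Qed.
Lemma jprob_split pi s a (i : 'I_n) :
  jprob pi s a = pi i s (a i) * \prod_(l < n | l != i) pi l s (a l).
Proof. by rewrite /jprob (bigD1 i). Qed.

Lemma marg pi s (i : 'I_n) (ai : A i) : is_jpol pi ->
  \sum_(a : jact A | a i == ai) \prod_(l < n | l != i) pi l s (a l) = 1.
Proof.
move=> hpi.
pose f := fun (l : 'I_n) (x : A l) =>
  if l == i then (Tagged A x == Tagged A ai)%:R else pi l s x : R.
have H := @sum_prod_dffun R 'I_n A f.
have E : \prod_l \sum_x f l x = 1.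
  apply: big1 => l _; case: (eqVneq l i) => [e|hl].
    subst l; rewrite /f eqxx.
    under eq_bigr do rewrite eq_Tagged /=.
    rewrite (bigD1 ai) //= eqxx big1 ?addr0 // => x /negbTE ->; by [].
  by rewrite /f; under eq_bigr do rewrite (negbTE hl); exact: (hpi l s).2.
rewrite E in H; transitivity (\sum_(a : jact A) \prod_l f l (a l)); last exact: H.
rewrite big_mkcond /=; apply: eq_bigr => a _.
rewrite [in RHS](bigD1 i) // /f eqxx eq_Tagged /=.
have -> : \prod_(l < n | l != i) (if l == i then (Tagged A (a l) == Tagged A ai)%:R else pi l s (a l))
   = \prod_(l < n | l != i) pi l s (a l).
  by apply: eq_bigr => l hl; rewrite (negbTE hl).
by case: eqP => _; rewrite ?mul1r ?mul0r.
Qed.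

Lemma wpartition pi s (i : 'I_n) (w : A i -> R) (g : jact A -> R) :
  \sum_(a : jact A) w (a i) * \prod_(l < n | l != i) pi l s (a l) * g a =
  \sum_(ai : A i) w ai * \sum_(a : jact A | a i == ai) \prod_(l < n | l != i) pi l s (a l) * g a.
Proof.
rewrite (partition_big (fun a : jact A => a i) predT) //=; apply: eq_bigr => ai _.
by rewrite mulr_sumr; apply: eq_bigr => a /eqP <-; ring.
Qed.

Section Pair.
Variables (pi pi' : jpol) (i : 'I_n).
Hypotheses (hpi : is_jpol pi) (hpi' : is_jpol pi') (hdiff : forall l, l != i -> pi' l = pi l).

Lemma jprob_split' s a :
  jprob pi' s a = pi' i s (a i) * \prod_(l < n | l != i) pi l s (a l).
Proof.
rewrite (jprob_split pi' s a i); congr (_ * _); apply: eq_bigr => l hl.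
by rewrite hdiff.
Qed.

Lemma M2 s :
  \sum_(ai : A i) pi' i s ai * Qi r P gamma pi s ai = \sum_(a : jact A) jprob pi' s a * Qf r P gamma pi s a.
Proof.
rewrite /Qi.
have := wpartition pi s i (pi' i s) (Qf r P gamma pi s); move=> <-.
by apply: eq_bigr => a _; rewrite jprob_split'.
Qed.

Definition delta s := \sum_(ai : A i) `|pi' i s ai - pi i s ai|.

Lemma M3 s : \sum_(a : jact A) `|jprob pi' s a - jprob pi s a| = delta s.
Proof.
transitivity (\sum_(a : jact A) `|pi' i s (a i) - pi i s (a i)| * \prod_(l < n | l != i) pi l s (a l) * 1).
  apply: eq_bigr => a _; rewrite jprob_split' (jprob_split pi s a i) -mulrBl normrM mulr1.
  by rewrite (ger0_norm (prodr_ge0 _ _)) // => l _; exact: (hpi l s).1.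
rewrite (wpartition pi s i (fun ai => `|pi' i s ai - pi i s ai|) (fun _ => 1)) /delta; apply: eq_bigr => ai _.
under eq_bigr do rewrite mulr1.
by rewrite marg // mulr1.
Qed.

Lemma Af_le_eps s a : `|Af r P gamma pi s a| <= epsA r P gamma pi.
Proof.
rewrite /epsA; apply: le_trans (le_bigmax0 R _ (fun s => \big[Num.max/0]_(a : jact A) `|Af r P gamma pi s a|) s).
exact: (le_bigmax0 R _ (fun a => `|Af r P gamma pi s a|) a).
Qed.

Lemma eps_ge0 : 0 <= epsA r P gamma pi.
Proof.
rewrite /epsA; elim/big_ind: _ => //; first by move=> x y hx hy; rewrite le_max hx.
move=> s _; elim/big_ind: _ => //; first by move=> x y hx hy; rewrite le_max hx.
Qed.

Lemma Gf_Qi s : Gf pi pi' s = \sum_(ai : A i) pi' i s ai * Ai r P gamma pi s ai.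
Proof.
rewrite /Ai; under eq_bigr do rewrite mulrBr.
rewrite sumrB -mulr_suml (hpi' i s).2 mul1r M2 /Gf sumQ //.
Qed.

Lemma Gf_bound s : `|Gf pi pi' s| <= epsA r P gamma pi * delta s.
Proof.
have -> : Gf pi pi' s = \sum_(a : jact A) (jprob pi' s a - jprob pi s a) * Af r P gamma pi s a.
  under eq_bigr do rewrite mulrBl.
  rewrite sumrB Af_zero // subr0 /Af; under eq_bigr do rewrite mulrBr.
  by rewrite sumrB -mulr_suml jprob_sum1 // mul1r /Gf sumQ.
rewrite -M3 mulr_sumr; apply: (le_trans (ler_norm_sum _ _ _)).
apply: ler_sum => a _; rewrite normrM mulrC; apply: ler_wpM2r => //.
exact: Af_le_eps.
Qed.

Lemma Pdiff s : \sum_u `|Ppi P pi' s u - Ppi P pi s u| <= delta s.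
Proof.
rewrite -M3.
apply: (@le_trans _ _ (\sum_u \sum_(a : jact A) `|jprob pi' s a - jprob pi s a| * P s a u)).
  apply: ler_sum => u _; rewrite /Ppi -sumrB.
  apply: (le_trans (ler_norm_sum _ _ _)); apply: ler_sum => a _.
  by rewrite -mulrBl normrM (ger0_norm ((hP s a).1 u)).
rewrite exchange_big /=; apply: ler_sum => a _.
by rewrite -mulr_sumr (hP s a).2 mulr1.
Qed.

Variable d : S -> R.
Hypotheses (d0 : forall s, 0 <= d s) (d1 : \sum_s d s = 1).

Definition dmax := \big[Num.max/0]_s delta s.

Lemma delta_le s : delta s <= dmax.
Proof. exact: (le_bigmax0 R _ delta s). Qed.

Lemma delta_ge0 s : 0 <= delta s.
Proof. by apply: sumr_ge0 => ai _; exact: normr_ge0. Qed.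

Lemma chain_diff t :
  l1 (fun u => sdist P pi' d t u - sdist P pi d t u) <= t%:R * dmax.
Proof.
elim: t => [|t IH].
  by rewrite /l1 /=; under eq_bigr do rewrite subrr normr0; rewrite big1 // mul0r.
set x := sdist P pi' d t; set y := sdist P pi d t.
rewrite /l1 /=.
apply: (@le_trans _ _ (\sum_u (\sum_s `|x s - y s| * Ppi P pi' s u
    + \sum_s y s * `|Ppi P pi' s u - Ppi P pi s u|))).
  apply: ler_sum => u _.
  have -> : \sum_s x s * Ppi P pi' s u - \sum_s y s * Ppi P pi s u =
      \sum_s ((x s - y s) * Ppi P pi' s u + y s * (Ppi P pi' s u - Ppi P pi s u)).
    by rewrite -sumrB; apply: eq_bigr => s _; ring.
  apply: (le_trans (ler_norm_sum _ _ _)); rewrite -big_split; apply: ler_sum => s _.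
  apply: (le_trans (ler_normD _ _)); rewrite !normrM (ger0_norm (Ppi_ge0 pi' s u hpi')).
  by rewrite (ger0_norm (sdist_ge0 pi d t s hpi d0)).
rewrite big_split /= exchange_big [X in _ + X]exchange_big /=.
have -> : \sum_s \sum_u `|x s - y s| * Ppi P pi' s u = l1 (fun u => x u - y u).
  by apply: eq_bigr => s _; rewrite -mulr_sumr Ppi_sum1 // mulr1.
rewrite -natr1 mulrDl mul1r; apply: lerD => //.
apply: (@le_trans _ _ (\sum_s y s * dmax)).
  apply: ler_sum => s _; rewrite -mulr_sumr; apply: ler_wpM2l.
    exact: (sdist_ge0 pi d t s hpi d0).
  exact: le_trans (Pdiff s) (delta_le s).
by rewrite -mulr_suml /y sdist_sum // d1 mul1r.
Qed.

Lemma rho_cvg s :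
  (fun N => \sum_(t < N) gamma ^+ t * sdist P pi d t s) @ \oo --> rho P gamma d pi s.
Proof.
apply: (@series_cvg R gamma hg0 hg1 (fun t => gamma ^+ t * sdist P pi d t s) (l1 d)) => t.
rewrite normrM ger0_norm ?exprn_ge0 // mulrC; apply: ler_wpM2r; first exact: exprn_ge0.
exact: le_trans (abs_le_l1 _ s) (sdist_l1 pi d t hpi).
Qed.

Lemma L_cvg : partial pi d (Gf pi pi') @ \oo --> Lsur r P gamma d pi (pi' i).
Proof.
rewrite /Lsur.
have -> : partial pi d (Gf pi pi') =
    fun N => \sum_s (\sum_(t < N) gamma ^+ t * sdist P pi d t s) * Gf pi pi' s.
  apply/funext => N; rewrite /partial /dot.
  under eq_bigr do rewrite mulr_sumr.
  rewrite exchange_big /=; apply: eq_bigr => s _; rewrite mulr_suml.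
  by apply: eq_bigr => t _; rewrite mulrA.
apply: (cvg_sumr R _ _ _ (fun s N => (\sum_(t < N) gamma ^+ t * sdist P pi d t s) * Gf pi pi' s)) => s.
rewrite -Gf_Qi; apply: cvgM; [exact: rho_cvg|exact: cvg_cst].
Qed.

Lemma trpo_bound :
  `|(Jf r P gamma d pi' - Jf r P gamma d pi) - Lsur r P gamma d pi (pi' i)| <=
  epsA r P gamma pi * dmax ^+ 2 * (gamma / (1 - gamma) ^+ 2).
Proof.
have hc : (fun N => partial pi' d (Gf pi pi') N - partial pi d (Gf pi pi') N) @ \oo -->
    (Jf r P gamma d pi' - Jf r P gamma d pi) - Lsur r P gamma d pi (pi' i).
  by apply: cvgB; [exact: (PDL pi pi' d hpi hpi')|exact: L_cvg].
apply: (lim_abs_bound R _ _ _ hc) => N.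
have e0 := eps_ge0.
have [s0 _] := S_inhabited _ d1.
have dm0 : 0 <= dmax by apply: le_trans (delta_le s0); exact: delta_ge0.
rewrite /partial -sumrB.
apply: (le_trans (ler_norm_sum _ _ _)).
apply: (@le_trans _ _ (\sum_(t < N) (t%:R * gamma ^+ t) * (epsA r P gamma pi * dmax ^+ 2))).
  apply: ler_sum => t _; rewrite -mulrBr normrM ger0_norm ?exprn_ge0 //.
  have -> : dot (sdist P pi' d t) (Gf pi pi') - dot (sdist P pi d t) (Gf pi pi') =
      dot (fun u => sdist P pi' d t u - sdist P pi d t u) (Gf pi pi').
    by rewrite /dot -sumrB; apply: eq_bigr => s _; rewrite mulrBl.
  have hG : forall s, `|Gf pi pi' s| <= epsA r P gamma pi * dmax.
    move=> s; apply: le_trans (Gf_bound s) _; apply: ler_wpM2l => //; exact: delta_le.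
  apply: (le_trans (ler_wpM2l (exprn_ge0 _ hg0) (dot_bound_c _ _ _ hG))).
  apply: (@le_trans _ _ (gamma ^+ t * (t%:R * dmax * (epsA r P gamma pi * dmax)))).
    apply: ler_wpM2l; first exact: exprn_ge0.
    apply: ler_wpM2r; first exact: mulr_ge0.
    exact: chain_diff.
  by rewrite le_eqVlt; apply/orP; left; apply/eqP; ring.
rewrite -mulr_suml mulrC; apply: ler_wpM2l; first exact: mulr_ge0 (exprn_ge0 _ dm0).
exact: tgeom_sum_le.
Qed.

End Pair.

Lemma Lsur_self pi (i : 'I_n) (d : S -> R) : is_jpol pi -> Lsur r P gamma d pi (pi i) = 0.
Proof.
move=> hpi; rewrite /Lsur big1 // => s _.
rewrite -(Gf_Qi pi pi i hpi hpi (fun l _ => erefl) s) /Gf -bellman // subrr mulr0 //.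
Qed.

Lemma KL_self_le0 (T : finType) (p : T -> R) : (KL p p <= 0)%E.
Proof.
rewrite /KL; case: ifPn => [/existsP [t /andP [h1 /eqP h2]]|_].
  by rewrite h2 ltxx in h1.
rewrite lee_fin big1 // => t ht; by rewrite divff ?ln1 ?mulr0 // gt_eqF.
Qed.

Lemma DmaxKL_self (T : finType) (p : S -> T -> R) : (DmaxKL p p <= 0)%E.
Proof.
rewrite /DmaxKL; elim/big_ind: _ => [|x y hx hy|s _]; [exact: leNye| by rewrite ge_max hx hy| exact: KL_self_le0].
Qed.

Lemma Dmax_ge pi pi' (i : 'I_n) (d : S -> R) : is_jpol pi -> is_jpol pi' -> \sum_s d s = 1 ->
  ((dmax pi pi' i ^+ 2 / 4)%:E <= DmaxKL (pi i) (pi' i))%E.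
Proof.
move=> hpi hpi' d1.
have [s0 _] := S_inhabited _ d1.
have key s : ((delta pi pi' i s ^+ 2 / 4)%:E <= DmaxKL (pi i) (pi' i))%E.
  apply: le_trans _ (le_bigmaxe R S (fun s => KL (pi i s) (pi' i s)) s).
  have := pinsker4 R _ (pi i s) (pi' i s) (hpi i s).1 (hpi i s).2 (hpi' i s).1 (hpi' i s).2.
  by rewrite /delta; under eq_bigr do rewrite distrC.
case: (bigmax0_attained R S (delta pi pi' i)) => [h|[s1 h]]; rewrite /dmax h; last exact: key.
apply: le_trans (key s0); rewrite lee_fin expr0n /= mul0r.
by apply: divr_ge0 => //; exact: sqr_ge0.
Qed.

Lemma trpo_step pi pi' (i : 'I_n) (d : S -> R) : is_jpol pi -> is_jpol pi' ->
  (forall l, l != i -> pi' l = pi l) -> (forall s, 0 <= d s) -> \sum_s d s = 1 ->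
  (Fobj r P gamma d pi (pi i) (pi i) <= Fobj r P gamma d pi (pi i) (pi' i))%E ->
  Jf r P gamma d pi <= Jf r P gamma d pi'.
Proof.
move=> hpi hpi' hdiff d0 d1 hF.
set C := Cpen r P gamma pi; set L := Lsur r P gamma d pi (pi' i).
set D := DmaxKL (pi i) (pi' i); set dm := dmax pi pi' i.
have C0 : 0 <= C.
  rewrite /C /Cpen; apply: divr_ge0; last by rewrite exprn_ge0 // subr_ge0 ltW.
  by apply: mulr_ge0; [apply: mulr_ge0|exact: eps_ge0].
have F0 : (0 <= Fobj r P gamma d pi (pi i) (pi i))%E.
  rewrite /Fobj Lsur_self // sub0e oppe_ge0; apply: mule_ge0_le0; first by rewrite lee_fin.
  exact: DmaxKL_self.
have hF' := le_trans F0 hF.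
have hD : ((dm ^+ 2 / 4)%:E <= D)%E by exact: (Dmax_ge pi pi' i d hpi hpi' d1).
have h1 : (L%:E - C%:E * D <= (L - C * (dm ^+ 2 / 4))%:E)%E.
  rewrite EFinB; apply: leeB => //; rewrite EFinM; exact: lee_wpmul2l.
have h2 : 0 <= L - C * (dm ^+ 2 / 4) by rewrite -lee_fin; exact: le_trans hF' h1.
have hb := trpo_bound pi pi' i hpi hpi' hdiff d d0 d1.
have eq : C * (dm ^+ 2 / 4) = epsA r P gamma pi * dm ^+ 2 * (gamma / (1 - gamma) ^+ 2).
  rewrite /C /Cpen; field; rewrite subr_eq0 gt_eqF //.
rewrite eq in h2; move: hb; rewrite -/L -/dm ler_norml => /andP [hb1 hb2].
lra.
Qed.

Lemma trpo_step' pi pi' (i : 'I_n) (d : S -> R) (sg sg' : pol R S A i) :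
  is_jpol pi -> is_jpol pi' ->
  (forall l, l != i -> pi' l = pi l) -> (forall s, 0 <= d s) -> \sum_s d s = 1 ->
  pi i = sg -> pi' i = sg' ->
  (Fobj r P gamma d pi sg sg <= Fobj r P gamma d pi sg sg')%E ->
  Jf r P gamma d pi <= Jf r P gamma d pi'.
Proof.
move=> hpi hpi' hdiff d0 d1 e e' hF; apply: (trpo_step pi pi' i d) => //.
by rewrite e e'.
Qed.

Lemma Jbnd pi (d : S -> R) : is_jpol pi -> (forall s, 0 <= d s) -> \sum_s d s = 1 ->
  Jf r P gamma d pi <= `|Rmax| / (1 - gamma).
Proof.
move=> hpi d0 d1; apply: le_trans (ler_norm _) _.
apply: (lim_abs_bound R _ _ _ (partial_cvg pi d (rpi r pi) hpi)) => N.
rewrite /partial; apply: (le_trans (ler_norm_sum _ _ _)).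
apply: (@le_trans _ _ (\sum_(t < N) gamma ^+ t * `|Rmax|)).
  apply: ler_sum => t _; rewrite normrM ger0_norm ?exprn_ge0 //.
  apply: ler_wpM2l; first exact: exprn_ge0.
  apply: (le_trans (dot_bound_c _ _ _ (fun s => rpi_bound pi s hpi))).
  by rewrite l1_dist ?mul1r //; [move=> s; exact: sdist_ge0|rewrite sdist_sum].
by rewrite -mulr_suml mulrC; apply: ler_wpM2l => //; exact: geom_sum_le.
Qed.

Lemma main_thm (d : S -> R) (hd : is_dist d) (K : 'I_n -> nat)
  (pik : nat -> jpol) (mic : nat -> forall i : 'I_n, nat -> pol R S A i)
  (h0 : is_jpol (pik 0%N))
  (hmic0 : forall k i, mic k i 0%N = pik k i)
  (hnext : forall k i, pik k.+1 i = mic k i (K i))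
  (hstep : forall k (i : 'I_n) j, (j < K i)%N ->
     is_pol (mic k i j.+1) /\
     forall hat : pol R S A i, is_pol hat ->
       (Fobj r P gamma d (baseline (pik k) (pik k.+1) i (fun l => mic k l j)) (mic k i j) hat
        <= Fobj r P gamma d (baseline (pik k) (pik k.+1) i (fun l => mic k l j)) (mic k i j)
             (mic k i j.+1))%E) :
  exists Jbar : R,
    (fun k => Jf r P gamma d (pik k)) @ \oo --> Jbar /\
    (exists (phi : nat -> nat) (pibar : jpol),
        (forall m, (phi m < phi m.+1)%N) /\
        (forall i s (x : A i), (fun m => pik (phi m) i s x) @ \oo --> pibar i s x)) /\
    (forall (phi : nat -> nat) (pibar : jpol),
        (forall m, (phi m < phi m.+1)%N) ->
        (forall i s (x : A i), (fun m => pik (phi m) i s x) @ \oo --> pibar i s x) ->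
        Jf r P gamma d pibar = Jbar).
Proof.
case: hd => [d0 d1].
have micv : forall k, is_jpol (pik k) -> forall i j, (j <= K i)%N -> is_pol (mic k i j).
  move=> k hk i; elim => [_|j IH hj]; first by rewrite hmic0; exact: hk.
  exact: (hstep k i j hj).1.
have pikv : forall k, is_jpol (pik k).
  elim => [//|k IH] i; rewrite hnext; exact: micv.
pose Bl k i j := baseline (pik k) (pik k.+1) i (fun l => mic k l j).
have Bl_i k i j : Bl k i j i = mic k i j by rewrite /Bl /baseline ltnn.
have eqord : forall l i : 'I_n, (l < i)%N = false -> (i < l)%N = false -> l = i.
  move=> l i h1 h2; apply/val_inj/eqP; rewrite eqn_leq.
  by rewrite (leqNgt l i) (leqNgt i l) h1 h2.
have Bl_v k i j : (j <= K i)%N -> is_jpol (Bl k i j).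
  move=> hj l; rewrite /Bl /baseline; case: ifP => h1; first exact: pikv.
  case: ifP => h2; first exact: pikv.
  have e := eqord l i h1 h2; subst l; exact: micv.
have Bl_diff k i j : forall l, l != i -> Bl k i j.+1 l = Bl k i j l.
  move=> l hl; rewrite /Bl /baseline; case: ifP => // h1; case: ifP => // h2.
  by move: hl; rewrite (eqord l i h1 h2) eqxx.
have step k i j : (j < K i)%N -> Jf r P gamma d (Bl k i j) <= Jf r P gamma d (Bl k i j.+1).
  move=> hj; have [hv hF] := hstep k i j hj.
  have hle := hF (mic k i j) (micv k (pikv k) i j (ltnW hj)).
  exact: (trpo_step' (Bl k i j) (Bl k i j.+1) i d (mic k i j) (mic k i j.+1)
    (Bl_v k i j (ltnW hj)) (Bl_v k i j.+1 hj) (Bl_diff k i j) d0 d1 (Bl_i k i j) (Bl_i k i j.+1) hle).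
have chain k i : forall j, (j <= K i)%N -> Jf r P gamma d (Bl k i 0) <= Jf r P gamma d (Bl k i j).
  elim => [//|j IH hj]; exact: le_trans (IH (ltnW hj)) (step k i j hj).
pose Q k (m : nat) : jpol := fun l => if (l < m)%N then pik k.+1 l else pik k l.
have jext : forall p q : jpol, (forall l s x, p l s x = q l s x) -> p = q.
  move=> p q h; apply: functional_extensionality_dep => l.
  by apply/funext => s; apply/funext => x; exact: h.
have QB0 k (i : 'I_n) : Q k i = Bl k i 0.
  apply: jext => l s x; rewrite /Q /Bl /baseline; case: ifP => // h1; case: ifP => // h2.
  by have e := eqord l i h1 h2; subst l; rewrite hmic0.
have QBK k (i : 'I_n) : Q k i.+1 = Bl k i (K i).
  apply: jext => l s x; rewrite /Q /Bl /baseline ltnS.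
  case: ltngtP => h //.
  have e : l = i by apply: val_inj.
  by subst l; rewrite hnext.
have Qstep k m : (m < n)%N -> Jf r P gamma d (Q k m) <= Jf r P gamma d (Q k m.+1).
  move=> hm; pose i := Ordinal hm.
  have := QB0 k i; rewrite /= => ->; have := QBK k i; rewrite /= => ->.
  exact: chain k i (K i) (leqnn _).
have Qmono k : forall m, (m <= n)%N -> Jf r P gamma d (Q k 0) <= Jf r P gamma d (Q k m).
  elim => [//|m IH hm]; exact: le_trans (IH (ltnW hm)) (Qstep k m hm).
have Jmono k : Jf r P gamma d (pik k) <= Jf r P gamma d (pik k.+1).
  have e0 : Q k 0 = pik k by apply: jext => l s x; rewrite /Q ltn0.
  have en : Q k n = pik k.+1 by apply: jext => l s x; rewrite /Q ltn_ord.
  rewrite -e0 -en; exact: Qmono.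
set u := fun k => Jf r P gamma d (pik k).
have Jcv : u @ \oo --> sup (range u).
  apply: nondecreasing_cvgn; first by apply/nondecreasing_seqP => k; exact: Jmono.
  by exists (`|Rmax| / (1 - gamma)) => _ [k _ <-]; exact: Jbnd.
exists (sup (range u)); split => //; split.
  pose x k (p : (S * {l : 'I_n & A l})%type) := pik k (tag p.2) p.1 (tagged p.2).
  have hx : forall k p, `|x k p| <= 1.
    move=> k [s [l a]]; rewrite /x /=.
    have [h1 h2] := pikv k l s.
    rewrite ger0_norm // -h2 (bigD1 a) //= lerDl; exact: sumr_ge0.
  have [phi [hphi [L hL]]] := bw_seq R _ x (index_enum (S * {l : 'I_n & A l})%type) hx.
  exists phi, (fun l s (y : A l) => L (s, Tagged A y)); split => // i s y.
  exact: (hL (s, Tagged A y) (mem_index_enum _)).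
move=> phi pibar hphi hcv.
have hbar : is_jpol pibar.
  move=> l s; split.
    move=> x; apply: (lim_ge_bound R _ _ _ (hcv l s x)) => m; exact: ((pikv (phi m)) l s).1 x.
  have H : (fun m : nat => (1:R)) @ \oo --> \sum_(x : A l) pibar l s x.
    have -> : (fun m : nat => (1:R)) = (fun m => \sum_(x : A l) pik (phi m) l s x).
      by apply/funext => m; rewrite ((pikv (phi m)) l s).2.
    exact: (cvg_sumr R _ _ _ (fun x m => pik (phi m) l s x) (fun x => pibar l s x) (hcv l s)).
  apply: (lim_uniq R _ _ _ H); exact: cvg_cst.
have J1 := J_cont (fun m => pik (phi m)) pibar d hbar (fun m => pikv (phi m)) hcv d0 d1.
have J2 := subseq_cvg R phi u _ hphi Jcv.
exact: (lim_uniq R _ _ _ J1 J2).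
Qed.

End MDP.

Theorem corollary1 (R : realType) (S : finType) (n : nat) (A : 'I_n -> finType)
  (r : S -> jact A -> R) (Rmax : R) (P : S -> jact A -> S -> R) (d : S -> R) (gamma : R)
  (hr : forall s a, `|r s a| <= Rmax)
  (hP : forall s a, is_dist (P s a)) (hd : is_dist d)
  (hg0 : 0 <= gamma) (hg1 : gamma < 1)
  (K : 'I_n -> nat) (hK : forall i, (0 < K i)%N)
  (pik : nat -> jpol R S A) (mic : nat -> forall i : 'I_n, nat -> pol R S A i)
  (h0 : is_jpol (pik 0%N))
  (hmic0 : forall k i, mic k i 0%N = pik k i)
  (hnext : forall k i, pik k.+1 i = mic k i (K i))
  (hstep : forall k (i : 'I_n) j, (j < K i)%N ->
     is_pol (mic k i j.+1) /\
     forall hat : pol R S A i, is_pol hat ->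
       (Fobj r P gamma d (baseline (pik k) (pik k.+1) i (fun l => mic k l j)) (mic k i j) hat
        <= Fobj r P gamma d (baseline (pik k) (pik k.+1) i (fun l => mic k l j)) (mic k i j)
             (mic k i j.+1))%E) :
  exists Jbar : R,
    (fun k => Jf r P gamma d (pik k)) @ \oo --> Jbar /\
    (exists (phi : nat -> nat) (pibar : jpol R S A),
        (forall m, (phi m < phi m.+1)%N) /\
        (forall i s a, (fun m => pik (phi m) i s a) @ \oo --> pibar i s a)) /\
    (forall (phi : nat -> nat) (pibar : jpol R S A),
        (forall m, (phi m < phi m.+1)%N) ->
        (forall i s a, (fun m => pik (phi m) i s a) @ \oo --> pibar i s a) ->
        Jf r P gamma d pibar = Jbar).
Proof.
exact: (main_thm R S n A r Rmax P gamma hr hP hg0 hg1 d hd K pik mic h0 hmic0 hnext hstep).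
Qed.
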